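(* For every $Q\subset\mathrm{EX}(M)$ and every $(\alpha,U)\in S_Q$, the restriction $q|_{N_{(\alpha,U)}}:N_{(\alpha,U)}\to q(N_{(\alpha,U)})$ is a homeomorphism onto its image.
   Context: Conventions: $M$ is an $n$-dimensional smooth manifold (Hausdorff, second countable) with maximal $C^\infty$ atlas $\mathcal{A}(M)$; every chart $\alpha$ has open domain $\mathrm{dom}(\alpha)\subset M$ and open range $\mathrm{ran}(\alpha)\subset\mathbb{R}^n$. For $A\subset\mathbb{R}^n$, $\partial A$ is its boundary in $\mathbb{R}^n$; for $A\subset U\subset\mathbb{R}^n$, $\partial_U A$ is the boundary of $A$ relative to $U$. An admissible boundary point of $\alpha$ is a $p\in\partial\,\mathrm{ran}(\alpha)$ such that every sequence $(x_i)\subset\mathrm{dom}(\alpha)$ with $\alpha(x_i)\to p$ has no accumulation point in $M$; $B(\alpha)$ is the set of these. An extension is a pair $(\alpha,U)$, $U\subset\mathbb{R}^n$ open, $\mathrm{ran}(\alpha)\subset U$, $\emptyset\ne\partial_U\mathrm{ran}(\alpha)\subset B(\alpha)$; $\mathrm{EX}(M)$ is the set of extensions. A boundary set is $(\alpha,U,V)$ with $(\alpha,U)\in\mathrm{EX}(M)$, $V\subset B(\alpha)\cap U$ (a boundary point if $V=\{p\}$). $(\alpha,U,V)$ covers $(\beta,X,Y)$ if for every sequence $(y_i)\subset\mathrm{dom}(\beta)$ with $(\beta(y_i))$ having an accumulation point in $Y$ there is a subsequence $(v_i)\subset\mathrm{dom}(\alpha)$ of $(y_i)$ with $(\alpha(v_i))$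 having an accumulation point in $V$; they are equivalent, $\equiv$, if each covers the other. Completion: for $Q\subset\mathrm{EX}(M)$ let $P=\{(\alpha,\mathrm{ran}(\alpha)):\alpha\in\mathcal{A}(M)\}$, $S_Q=P\cup Q$, $N_{(\alpha,U)}=\mathrm{ran}(\alpha)\cup\partial_U\mathrm{ran}(\alpha)$ with subspace topology of $\mathbb{R}^n$, $N_Q=\bigsqcup_{(\alpha,U)\in S_Q}N_{(\alpha,U)}$ with disjoint-union topology. Identify $x\in N_{(\alpha,U)}$ with $y\in N_{(\beta,X)}$ iff either $x\in\mathrm{ran}(\alpha)$, $y\in\mathrm{ran}(\beta)$, $\beta\circ\alpha^{-1}(x)=y$, or $x\in\partial_U\mathrm{ran}(\alpha)$, $y\in\partial_X\mathrm{ran}(\beta)$, $(\alpha,U,\{x\})\equiv(\beta,X,\{y\})$. $Q(M)$ is the quotient space with the quotient topology and $q:N_Q\to Q(M)$ the quotient map. *)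

(* Defs.v *)
From HB Require Import structures.
From mathcomp Require Import all_boot all_order all_algebra.
From mathcomp Require Import all_classical all_reals all_analysis.
From Stdlib Require Relation_Operators.
Set Implicit Arguments. Unset Strict Implicit. Unset Printing Implicit Defensive.
Import Order.TTheory GRing.Theory Num.Theory.
Import numFieldNormedType.Exports.
Local Open Scope classical_set_scope.
Local Open Scope ring_scope.

Section Defs.
Variables (R : realType) (n : nat) (M : topologicalType).

Notation Rn := ('rV[R]_n).

Fixpoint iter_deriv (vs : seq Rn) (g : Rn -> Rn) : Rn -> Rn :=
  match vs with
  | [::] => g
  | v :: vs' => fun x => 'D_v (iter_deriv vs' g) x
  end.

Definition smooth_on (O : set Rn) (g : Rn -> Rn) : Prop :=
  (forall vs v x, O x -> derivable (iter_deriv vs g) x v) /\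
  (forall vs x, O x -> {for x, continuous (iter_deriv vs g)}).

Definition chart := (set M * (M -> Rn))%type.
Definition cdom (a : chart) : set M := a.1.
Definition cmap (a : chart) : M -> Rn := a.2.
Definition cran (a : chart) : set Rn := cmap a @` cdom a.

Definition is_chart (a : chart) : Prop :=
  [/\ open (cdom a),
      {in cdom a &, injective (cmap a)},
      {within cdom a, continuous (cmap a)} &
      forall O, open O -> O `<=` cdom a -> open (cmap a @` O)].

Definition compatible (a b : chart) : Prop :=
  (exists g, smooth_on (cmap a @` (cdom a `&` cdom b)) g /\
     forall x, cdom a x -> cdom b x -> g (cmap a x) = cmap b x) /\
  (exists g, smooth_on (cmap b @` (cdom a `&` cdom b)) g /\
     forall x, cdom a x -> cdom b x -> g (cmap b x) = cmap a x).

Definition maximal_smooth_atlas (A : set chart) : Prop :=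
  [/\ forall a, A a -> is_chart a,
      forall x, exists2 a, A a & cdom a x,
      forall a b, A a -> A b -> compatible a b &
      forall b, is_chart b -> (forall a, A a -> compatible a b) -> A b].

Definition smooth_manifold (A : set chart) : Prop :=
  [/\ hausdorff_space M, @second_countable M & maximal_smooth_atlas A].

Definition boundary (X : set Rn) : set Rn := closure X `\` interior X.
Definition rel_boundary (U X : set Rn) : set Rn :=
  (closure X `&` U) `\` interior X.

Definition acc_point {T : topologicalType} (u : nat -> T) (p : T) : Prop :=
  cluster (u @ \oo) p.

Definition admissible (a : chart) : set Rn :=
  [set p | boundary (cran a) p /\
     forall u : nat -> M, (forall i, cdom a (u i)) ->
       (fun i => cmap a (u i)) @ \oo --> p ->
       ~ (exists m : M, acc_point u m)].

Definition extension (A : set chart) (e : chart * set Rn) : Prop :=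
  let: (a, U) := e in
  [/\ A a, open U, cran a `<=` U,
      rel_boundary U (cran a) !=set0 &
      rel_boundary U (cran a) `<=` admissible a].

Definition covers (a : chart) (V : set Rn) (b : chart) (Y : set Rn) : Prop :=
  forall y : nat -> M, (forall i, cdom b (y i)) ->
    (exists2 p, Y p & acc_point (fun i => cmap b (y i)) p) ->
    exists phi : nat -> nat, {homo phi : i j / (i < j)%N} /\
      (forall i, cdom a (y (phi i))) /\
      exists2 p, V p & acc_point (fun i => cmap a (y (phi i))) p.

Definition bequiv (a : chart) (V : set Rn) (b : chart) (Y : set Rn) : Prop :=
  covers a V b Y /\ covers b Y a V.

Definition ext_index := (chart * set Rn)%type.

Definition S_Q (A : set chart) (Q : set ext_index) : set ext_index :=
  [set e | (A e.1 /\ e.2 = cran e.1) \/ Q e].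

Definition Nset (e : ext_index) : set Rn :=
  cran e.1 `|` rel_boundary e.2 (cran e.1).

Definition NQ (A : set chart) (Q : set ext_index) : Type :=
  {s : S_Q A Q & Nset (val s)}.

Definition nq_index A Q (a : NQ A Q) : ext_index := val (projT1 a).
Definition nq_point A Q (a : NQ A Q) : Rn := val (projT2 a).

Definition ident A Q (a b : NQ A Q) : Prop :=
  let s := nq_index a in let x := nq_point a in
  let t := nq_index b in let y := nq_point b in
  (cran s.1 x /\ cran t.1 y /\
     exists z, [/\ cdom s.1 z, cdom t.1 z, cmap s.1 z = x & cmap t.1 z = y])
  \/
  (rel_boundary s.2 (cran s.1) x /\ rel_boundary t.2 (cran t.1) y /\
     bequiv s.1 [set x] t.1 [set y]).

Definition identb A Q : rel (NQ A Q) :=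
  fun a b => `[< Relation_Operators.clos_refl_sym_trans _ (@ident A Q) a b >].

Lemma identb_refl A Q : reflexive (@identb A Q).
Proof. by move=> a; apply/asboolP; apply: Relation_Operators.rst_refl. Qed.

Lemma identb_sym A Q : symmetric (@identb A Q).
Proof.
move=> a b; apply/asboolP/asboolP => h; exact: Relation_Operators.rst_sym.
Qed.

Lemma identb_trans A Q : transitive (@identb A Q).
Proof.
move=> b a c /asboolP h1 /asboolP h2; apply/asboolP; exact: Relation_Operators.rst_trans h1 h2.
Qed.

Definition ident_equiv A Q : equiv_rel (NQ A Q) :=
  @EquivRelPack _ (@identb A Q)
    (EquivClass (@identb_refl A Q) (@identb_sym A Q) (@identb_trans A Q)).

End Defs.

Local Open Scope quotient_scope.

Definition QM (R : realType) (n : nat) (M : topologicalType)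
  (A : set (chart R n M)) (Q : set (ext_index R n M)) : topologicalType :=
  quotient_topology {eq_quot (@ident_equiv R n M A Q)}.

Definition qmap (R : realType) (n : nat) (M : topologicalType)
  (A : set (chart R n M)) (Q : set (ext_index R n M)) : NQ A Q -> QM A Q :=
  \pi_(QM A Q).

Definition homeo_onto_image (X Y : topologicalType) (f : X -> Y) : Prop :=
  [/\ injective f, continuous f &
      forall O : set X, open O -> exists2 W : set Y, open W & f @` O = W `&` range f].

(* Main.v *)
Require Import Defs.
From HB Require Import structures.
From mathcomp Require Import all_boot all_order all_algebra.
From mathcomp Require Import all_classical all_reals all_analysis.
Import numFieldNormedType.Exports.
Local Open Scope classical_set_scope.

Module Helpers.
Import Order.TTheory GRing.Theory Num.Theory.
Local Open Scope ring_scope.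
Local Open Scope quotient_scope.
Set Implicit Arguments. Unset Strict Implicit. Unset Printing Implicit Defensive.

Section S.
Variables (R : realType) (n : nat) (M : topologicalType).
Notation Rn := ('rV[R]_n).

Lemma covers_refl (a : chart R n M) V : covers a V a V.
Proof.
move=> y dy [p Vp ap]; exists id; split => //; split => //; exists p => //.
Qed.

Lemma covers_trans (a b c : chart R n M) V Y Z :
  covers a V b Y -> covers b Y c Z -> covers a V c Z.
Proof.
move=> h1 h2 y dy hZ.
have [phi [phiI [dphi hY]]] := h2 y dy hZ.
have [psi [psiI [dpsi hV]]] := h1 (fun i => y (phi i)) dphi hY.
exists (fun i => phi (psi i)); split; last by split.
by move=> i j ij; apply: phiI; apply: psiI.
Qed.

Lemma bequiv_sym (a b : chart R n M) V Y : bequiv a V b Y -> bequiv b Y a V.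
Proof. by case. Qed.

Lemma bequiv_trans (a b c : chart R n M) V Y Z :
  bequiv a V b Y -> bequiv b Y c Z -> bequiv a V c Z.
Proof.
move=> [h1 h2] [h3 h4]; split; [exact: covers_trans h1 h3|exact: covers_trans h4 h2].
Qed.

Lemma cran_open (a : chart R n M) : is_chart a -> open (cran a).
Proof. by case=> h1 _ _ h4; apply: h4. Qed.

Lemma cran_rb (a : chart R n M) U x :
  is_chart a -> cran a x -> rel_boundary U (cran a) x -> False.
Proof.
move=> ha hx [_ hi]; apply: hi.
have := cran_open ha; rewrite openE; exact.
Qed.

Lemma homo_ge (phi : nat -> nat) : {homo phi : i j / (i < j)%N} -> forall i, (i <= phi i)%N.
Proof.
move=> h; elim=> [//|i IH].
have := h i i.+1 (ltnSn i); move=> hi. exact: leq_ltn_trans IH hi.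
Qed.

Lemma rb_closure U (X : set Rn) x : rel_boundary U X x -> closure X x.
Proof. by case=> [[]]. Qed.

Lemma closure_seq (a : chart R n M) x : closure (cran a) x ->
  exists u : nat -> M, (forall i, cdom a (u i)) /\
     forall i, ball x (i.+1%:R^-1) (cmap a (u i)).
Proof.
move=> hx.
have H : forall i : nat, exists z, cdom a z /\ ball x (i.+1%:R^-1) (cmap a z).
  move=> i.
  have hp : (0:R) < i.+1%:R^-1 by rewrite invr_gt0 ltr0Sn.
  have [p [[z dz <-] bz]] := hx (ball x (i.+1%:R^-1)) (nbhsx_ballx _ _ hp).
  by exists z.
have [u hu] := choice H.
by exists u; split => i; case: (hu i).
Qed.

Lemma ball_acc (g : nat -> Rn) x (phi : nat -> nat) :
  (forall i, ball x ((phi i).+1%:R^-1) (g i)) -> (forall i, (i <= phi i)%N) ->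
  forall (B : set Rn), nbhs x B -> (g @ \oo) B.
Proof.
move=> hg hphi B /nbhs_ballP [e /= e0 hB].
have [N _ hN] := near_infty_natSinv_lt (PosNum e0).
exists N => // i /= hi; apply: hB; apply: (le_ball (e1 := (phi i).+1%:R^-1)) => //.
apply: ltW; apply: (hN (phi i)) => /=; exact: leq_trans hi (hphi i).
Qed.

Lemma acc_of (g : nat -> Rn) x : (forall B, nbhs x B -> (g @ \oo) B) -> acc_point g x.
Proof.
move=> h A1 B1 hA1 hB1.
have [i [h1 h2]] := filter_ex (filterI hA1 (h _ hB1)).
by exists i.
Qed.

Lemma hausR : hausdorff_space Rn.
Proof. exact: norm_hausdorff. Qed.

Lemma bequiv_same (a : chart R n M) U x y :
  rel_boundary U (cran a) x -> covers a [set y] a [set x] -> x = y.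
Proof.
move=> /rb_closure hx hc.
have [u [du bu]] := closure_seq hx.
have accx : acc_point (fun i => cmap a (u i)) x.
  by apply: acc_of; apply: (ball_acc (phi := id)).
have [phi [phiI [dphi [p /= -> accy]]]] := hc u du (ex_intro2 _ _ x erefl accx).
apply: hausR => B1 B2 hB1 hB2.
apply: accy => //; apply: (ball_acc (phi := phi)) => //.
exact: homo_ge.
Qed.

End S.

Section T.
Variables (R : realType) (n : nat) (M : topologicalType)
  (A : set (chart R n M)) (Q : set (ext_index R n M))
  (hA : forall a, A a -> is_chart a) (hQ : Q `<=` extension A).

Lemma SQ_chart (s : S_Q A Q) : is_chart (val s).1.
Proof.
apply: hA; have := set_valP s.
case: (val s) => a U /= [[]//|/hQ] /=; by case.
Qed.

Lemma ident_sym (a b : NQ A Q) : ident a b -> ident b a.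
Proof.
rewrite /ident /=.
case=> [[h1 [h2 [z [d1 d2 m1 m2]]]]|[h1 [h2 hb]]]; [left|right].
  by split=> //; split => //; exists z; split.
by split => //; split => //; exact: bequiv_sym.
Qed.

Lemma NQ_point (a : NQ A Q) : Nset (nq_index a) (nq_point a).
Proof. exact: set_valP (projT2 a). Qed.

Lemma ident_refl (a : NQ A Q) : ident a a.
Proof.
rewrite /ident /=; case: (NQ_point a) => [[z dz hz]|hb]; [left|right].
  by split; [exists z|split; [exists z|exists z; split]].
by split => //; split => //; split; exact: covers_refl.
Qed.

Lemma ident_trans (a b c : NQ A Q) : ident a b -> ident b c -> ident a c.
Proof.
have cb := SQ_chart (projT1 b).
rewrite /ident /=.
case=> [[ha [hb [z [da db ma mb]]]]|[ha [hb hab]]];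
case=> [[hb' [hc [z' [db' dc mb' mc]]]]|[hb' [hc hbc]]].
- have zz : z = z'.
    case: cb => _ hinj _ _; apply: hinj; rewrite ?inE //.
    by rewrite mb mb'.
  by subst z'; left; split => //; split => //; exists z; split.
- by exfalso; exact: (cran_rb cb hb hb').
- by exfalso; exact: (cran_rb cb hb' hb).
- by right; split => //; split => //; exact: bequiv_trans hab hbc.
Qed.

Lemma identb_ident (a b : NQ A Q) : identb a b -> ident a b.
Proof.
move/asboolP; elim => [x y h | x | x y _ IH | x y z _ IH1 _ IH2].
- exact: h.
- exact: ident_refl.
- exact: ident_sym.
- exact: ident_trans IH1 IH2.
Qed.

End T.

Section U.
Variables (R : realType) (n : nat) (M : topologicalType)
  (A : set (chart R n M)) (Q : set (ext_index R n M))
  (hA : forall a, A a -> is_chart a) (hQ : Q `<=` extension A)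
  (s : S_Q A Q) (O' : set 'rV[R]_n).
Notation Rn := ('rV[R]_n).
Let al := (val s).1.
Let C := [set p : Rn | Nset (val s) p /\ ~ O' p].

Definition good (t : chart R n M) (N : set Rn) :=
  exists G : set Rn, (forall p, closure G p -> ~ C p) /\
    forall w, cdom t w -> N (cmap t w) -> cdom al w /\ G (cmap al w).

Definition V' (t : chart R n M) : set Rn :=
  [set p | exists N, [/\ open N, N p & good t N]].

Definition Vset : set (NQ A Q) := [set e | V' (nq_index e).1 (nq_point e)].

Lemma V'_open t : open (V' t).
Proof.
rewrite openE => p [N [oN Np gN]].
apply: (filterS _ (open_nbhs_nbhs (conj oN Np))) => q Nq.
by exists N; split.
Qed.

Lemma Vset_open : open Vset.
Proof.
apply/sigT_openP => i.
exists (V' (val i).1); first exact: V'_open.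
by [].
Qed.


Lemma Vset_sat (a b : NQ A Q) : ident a b -> Vset a -> Vset b.
Proof.
have ca := SQ_chart hA hQ (projT1 a).
have cb := SQ_chart hA hQ (projT1 b).
rewrite /ident /Vset /=.
case=> [[ha [hb [z [da db ma mb]]]]|[ha [hb [cab cba]]]] [N [oN Np [G [hG hgood]]]].
- set t := (nq_index a).1; set u := (nq_index b).1.
  set D := cdom t `&` cmap t @^-1` N `&` cdom u.
  have oD : open D.
    apply: openI; last by case: cb.
    case: ca => odt _ ct _.
    have := (continuous_inP (cmap t) odt).1.
    rewrite -continuous_open_subspace //; move=> /(_ ct N oN) //.
  exists (cmap u @` D); split.
  + by case: cb => _ _ _; apply => // w [].
  + by exists z => //; split => //; split => //; move: Np; rewrite -ma.
  + exists G; split => // w dw [w' [[dw' Nw'] dw'u] ew].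
    have ww : w' = w by case: cb => _ hinj _ _; apply: hinj; rewrite ?inE.
    by subst w'; apply: hgood.
- set t := (nq_index a).1; set u := (nq_index b).1.
  apply: contrapT => hnot.
  have H : forall k : nat, exists w, [/\ cdom u w,
      ball (nq_point b) (k.+1%:R^-1) (cmap u w) & ~ (cdom al w /\ G (cmap al w))].
    move=> k; apply: contrapT => hk; apply: hnot.
    have hp : (0:R) < k.+1%:R^-1 by rewrite invr_gt0 ltr0Sn.
    exists (ball (nq_point b) (k.+1%:R^-1)); split.
    + exact: ball_open.
    + exact: ballxx.
    + exists G; split => // w dw bw; apply: contrapT => hbad; apply: hk.
      by exists w; split.
  have [wq hw] := choice H.
  have dw : forall i, cdom u (wq i) by move=> i; case: (hw i).
  have accb : acc_point (fun i => cmap u (wq i)) (nq_point b).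
    apply: acc_of; apply: (ball_acc (phi := id)) => // i; by case: (hw i).
  have [phi [phiI [dphi [p /= -> accx]]]] := cab wq dw (ex_intro2 _ _ _ erefl accb).
  have Nn : nbhs (nq_point a) N by apply: open_nbhs_nbhs.
  have Fr : ((fun i => cmap t (wq (phi i))) @ \oo)
      (range (fun i => cmap t (wq (phi i)))).
    by exists 0%N => // j _; exists j.
  have [q [[i _ <-] Nq]] := accx _ _ Fr Nn.
  have [_ _ hbad] := hw (phi i).
  by apply: hbad; apply: hgood.
Qed.

Lemma Vset_O (x : set_type (Nset (val s))) (oO : open O') :
  Vset (existT _ s x) <-> O' (val x).
Proof.
split.
- rewrite /Vset /= => -[N [oN Np [G [hG hgood]]]].
  apply: contrapT => hO.
  have hN : Nset (val s) (val x) by exact: set_valP x.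
  apply: (hG (val x)); last by split.
  have hcl : closure (cran al) (val x).
    by case: hN => [h|h]; [exact: subset_closure|exact: rb_closure h].
  move=> B hB.
  have hBN : nbhs (val x) (B `&` N) by apply: filterI => //; exact: open_nbhs_nbhs.
  have [p [[z dz <-] [Bp Np']]] := hcl _ hBN.
  have [_ Gz] := hgood z dz Np'.
  by exists (cmap al z).
- move=> hO.
  have nO : nbhs (val x) O' by apply: open_nbhs_nbhs.
  have [B nB sB] := @uniform_regular Rn (val x) O' nO.
  exists (interior B); split.
  + exact: open_interior.
  + exact: nbhs_singleton (nbhs_interior nB).
  + exists B; split.
      by move=> p /sB Op [].
    by move=> w dw /interior_subset Bw.
Qed.
End U.

Section Q.
Variables (R : realType) (n : nat) (M : topologicalType)
    (A : set (chart R n M)) (Q : set (ext_index R n M)).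
Lemma qmapE (a b : NQ A Q) : @qmap R n M A Q a = @qmap R n M A Q b -> identb a b.
Proof.
move=> h.
have h2 : a = b %[mod {eq_quot (@ident_equiv R n M A Q)}] by exact: h.
by move/eqmodP: h2.
Qed.
End Q.
End Helpers.
Import Helpers.

Theorem mainTheorem16 (R : realType) (n : nat) (M : topologicalType)
    (A : set (chart R n M)) :
  smooth_manifold A ->
  forall Q : set (ext_index R n M), Q `<=` extension A ->
  forall s : S_Q A Q,
    homeo_onto_image (fun x : set_type (Nset (val s)) => @qmap R n M A Q (existT _ s x)).
Proof.
move=> [_ _ [hA _ _ _]] Q hQ s.
split.
- move=> x y /qmapE /(identb_ident hA hQ) h; apply: val_inj.
  case: h => [[hx [hy [z [d1 d2 m1 m2]]]]|[hx [hy [c1 c2]]]].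
    exact: (etrans (esym m1) m2).
  exact: bequiv_same hx c2.
- move=> x; apply: continuous_comp; first exact: existT_continuous.
  exact: pi_continuous.
- move=> U0 [W0 oW0 <-].
  have piV : forall e : NQ A Q, Vset s W0 (repr (@qmap R n M A Q e)) <-> Vset s W0 e.
    move=> e.
    have h : identb (repr (@qmap R n M A Q e)) e.
      apply: qmapE; rewrite /qmap; exact: reprK.
    have h1 := identb_ident hA hQ h.
    split => hv; [exact: (@Vset_sat _ _ _ _ _ hA hQ s W0 _ _ h1 hv)|exact: (@Vset_sat _ _ _ _ _ hA hQ s W0 _ _ (ident_sym h1) hv)].
  exists [set q : QM A Q | Vset s W0 (repr q)].
    have e1 : (@qmap R n M A Q) @^-1` [set q : QM A Q | Vset s W0 (repr q)] = Vset s W0.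
      by rewrite predeqE => e; exact: piV.
    have H := @Vset_open R n M A Q s W0; rewrite -e1 in H; exact H.
  rewrite eqEsubset; split.
  + move=> q [x Ox <-]; split; last by exists x.
    by apply/piV; apply/Vset_O.
  + move=> q [Wq [x _ xq]]; exists x => //.
    apply/(Vset_O (s:=s) x oW0); apply/piV; by rewrite xq.
Qed.
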